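(* Let $X$ be the class of continuous functions $f:[0,1]\to\mathbb{R}$ with $f(0),f(1)\in\mathbb{Z}$. Then each of the two families of operators $\widetilde{B}_n$, $n\in\mathbb{N}_+$, and $\widehat{B}_n$, $n\in\mathbb{N}_+$, uniformly asymptotically preserves monotonicity on $X$.
   Context: For $n\in\mathbb{N}_+$ and $f:[0,1]\to\mathbb{R}$, define $\widetilde{B}_n(f)(x):=\sum_{k=0}^n \left[f\left(\frac{k}{n}\right)\binom{n}{k}\right]x^k(1-x)^{n-k}$, where $[\alpha]$ is the largest integer $\le\alpha$, and $\widehat{B}_n(f)(x):=\sum_{k=0}^n \left\langle f\left(\frac{k}{n}\right)\binom{n}{k}\right\rangle x^k(1-x)^{n-k}$, where $\langle\alpha\rangle$ is the integer nearest to $\alpha$ (when $\alpha$ is a half-integer, $\langle\alpha\rangle$ may be either of the two neighbouring integers, chosen arbitrarily; the result holds for any such choice). Definition: a family of operators $L_n:X\to X$, $n\in\mathbb{N}_+$, on a class $X$ of functions defined on $I\subseteq\mathbb{R}$ uniformly asymptotically preserves monotonicity on $X$ if there exist $n_0\in\mathbb{N}_+$ and functions $\varepsilon_n,\eta_n:I\to\mathbb{R}$, $n\ge n_0$, such that: (i) $\varepsilon_n\to 0$ and $\eta_n\to 0$ uniformly on $I$ as $n\to\infty$; (ii) whenever $f\in X$ is monotone increasing on $I$, $L_n(f)+\varepsilon_n$ is monotone increasing on $I$ for all $n\ge n_0$; (iii) whenever $f\in X$ is monotone decreasing on $I$, $L_n(f)+\eta_n$ is monotone decreasing on $I$ for all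 $n\ge n_0$. Monotone increasing/decreasing are meant in the non-strict sense. *)

(* Defs.v *)
From HB Require Import structures.
From mathcomp Require Import all_boot all_order all_algebra.
From mathcomp Require Import all_classical all_reals all_analysis.
Set Implicit Arguments. Unset Strict Implicit. Unset Printing Implicit Defensive.
Import Order.TTheory GRing.Theory Num.Theory.
Import numFieldNormedType.Exports.
Local Open Scope classical_set_scope.
Local Open Scope ring_scope.

Definition Btilde (R : realType) (n : nat) (f : R -> R) (x : R) : R :=
  \sum_(k < n.+1)
    ((Num.floor (f (k%:R / n%:R) * ('C(n, k))%:R))%:~R * x ^+ k * (1 - x) ^+ (n - k)).

Definition Bhat (R : realType) (rnd : R -> int) (n : nat) (f : R -> R) (x : R) : R :=
  \sum_(k < n.+1)
    ((rnd (f (k%:R / n%:R) * ('C(n, k))%:R))%:~R * x ^+ k * (1 - x) ^+ (n - k)).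

(* rnd a is an integer nearest to a (either neighbour at half-integers) *)
Definition nearest_int (R : realType) (rnd : R -> int) : Prop :=
  forall a : R, `|a - (rnd a)%:~R| <= 2^-1.

Definition in_X (R : realType) (f : R -> R) : Prop :=
  {within `[(0:R), 1], continuous f} /\
  (exists z : int, f 0 = z%:~R) /\ (exists z : int, f 1 = z%:~R).

Definition incr_on01 (R : realType) (g : R -> R) : Prop :=
  forall x y : R, 0 <= x -> x <= y -> y <= 1 -> g x <= g y.

Definition decr_on01 (R : realType) (g : R -> R) : Prop :=
  forall x y : R, 0 <= x -> x <= y -> y <= 1 -> g y <= g x.

Definition unif_to0_on01 (R : realType) (e : nat -> R -> R) : Prop :=
  forall eps : R, 0 < eps -> exists N : nat, forall n : nat, (N <= n)%N ->
    forall x : R, 0 <= x -> x <= 1 -> `|e n x| < eps.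

Definition unif_asymp_pres_mono (R : realType)
    (L : nat -> (R -> R) -> R -> R) : Prop :=
  exists n0 : nat, (0 < n0)%N /\
  exists eps eta : nat -> R -> R,
    unif_to0_on01 eps /\ unif_to0_on01 eta /\
    (forall f, in_X f -> incr_on01 f ->
       forall n, (n0 <= n)%N -> incr_on01 (fun x => L n f x + eps n x)) /\
    (forall f, in_X f -> decr_on01 f ->
       forall n, (n0 <= n)%N -> decr_on01 (fun x => L n f x + eta n x)).

(* Main.v *)
Require Import Defs.
From HB Require Import structures.
From mathcomp Require Import all_boot all_order all_algebra.
From mathcomp Require Import all_classical all_reals all_analysis.
From mathcomp Require Import ring lra zify.
Import Order.TTheory GRing.Theory Num.Theory.
Local Open Scope ring_scope.

Section Bern.
Variable R : realType.

Definition bern (b : nat -> R) (n : nat) (x : R) : R :=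
  \sum_(k < n.+1) b k * ('C(n, k))%:R * x ^+ k * (1 - x) ^+ (n - k).

Lemma bernD b1 b2 n x : bern (fun k => b1 k + b2 k) n x = bern b1 n x + bern b2 n x.
Proof. rewrite /bern -big_split /=; apply: eq_bigr => k _; ring. Qed.

Lemma bernN b n x : bern (fun k => - b k) n x = - bern b n x.
Proof. rewrite /bern -sumrN; apply: eq_bigr => k _; ring. Qed.

Lemma bern_rec b n x :
  bern b n.+1 x = (1 - x) * bern b n x + x * bern (fun k => b k.+1) n x.
Proof.
rewrite /bern big_ord_recl /= bin0 subn0.
have -> : \sum_(i < n.+1) b (bump 0 i) * ('C(n.+1, bump 0 i))%:R * x ^+ bump 0 i *
      (1 - x) ^+ (n.+1 - bump 0 i) =
   \sum_(i < n.+1) b i.+1 * ('C(n, i.+1))%:R * x ^+ i.+1 * (1 - x) ^+ (n - i) +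
   \sum_(i < n.+1) b i.+1 * ('C(n, i))%:R * x ^+ i.+1 * (1 - x) ^+ (n - i).
  rewrite -big_split /=; apply: eq_bigr => i _.
  rewrite /bump /= add1n binS subSS natrD; ring.
rewrite mulr_sumr mulr_sumr [in RHS]big_ord_recl /= bin0 subn0.
rewrite big_ord_recr /= bin_small // mulr0 !mul0r addr0.
rewrite -addrA; congr (_ + _); first by rewrite !expr0 !mulr1 exprS; ring.
congr (_ + _); apply: eq_bigr => i _.
  rewrite /bump /= add1n.
  have -> : (n - i = (n - i.+1).+1)%N by have := ltn_ord i; lia.
  by rewrite [(1 - x) ^+ _.+1]exprS; ring.
by rewrite [x ^+ i.+1]exprS; ring.
Qed.

Lemma bern_ge0 b n x : (forall k, (k <= n)%N -> 0 <= b k) -> 0 <= x -> x <= 1 ->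
  0 <= bern b n x.
Proof.
move=> hb x0 x1; rewrite /bern; apply: sumr_ge0 => k _.
apply: mulr_ge0; last by apply: exprn_ge0; lra.
apply: mulr_ge0; last exact: exprn_ge0.
apply: mulr_ge0; last exact: ler0n.
by apply: hb; rewrite -ltnS.
Qed.

Lemma bern_const c n x : bern (fun _ => c) n x = c.
Proof.
rewrite /bern.
transitivity (c * ((1 - x) + x) ^+ n); last by rewrite subrK expr1n mulr1.
rewrite exprDn mulr_sumr; apply: eq_bigr => k _; rewrite -mulr_natr; ring.
Qed.

Lemma bern_le b n x M : (forall k, (k <= n)%N -> b k <= M) -> 0 <= x -> x <= 1 ->
  bern b n x <= M.
Proof.
move=> hb x0 x1.
have := @bern_ge0 (fun k => M - b k) n x.
rewrite (bernD (fun _ => M) (fun k => - b k)) bernN bern_const subr_ge0; apply => //.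
by move=> k hk; rewrite subr_ge0 hb.
Qed.

Lemma bern_mono n : forall b, (forall k, (k < n)%N -> b k <= b k.+1) ->
  incr_on01 (bern b n).
Proof.
elim: n => [|n IH] b hb x y x0 xy y1.
  by rewrite /bern !big_ord1 /= !expr0.
rewrite !bern_rec.
have h1 : bern b n x <= bern b n y.
  by apply: IH => // k hk; apply: hb; apply: ltnW.
have h2 : bern (fun k => b k.+1) n x <= bern (fun k => b k.+1) n y.
  by apply: IH => // k hk; apply: hb.
have h3 : 0 <= bern (fun k => b k.+1) n x - bern b n x.
  rewrite -bernN -bernD; apply: bern_ge0 => //; last lra.
  by move=> k hk; rewrite subr_ge0 hb.
have h4 : 0 <= (1 - y) * (bern b n y - bern b n x) by apply: mulr_ge0; lra.
have h5 : 0 <= y * (bern (fun k => b k.+1) n y - bern (fun k => b k.+1) n x)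
  by apply: mulr_ge0; lra.
have h6 : 0 <= (y - x) * (bern (fun k => b k.+1) n x - bern b n x)
  by apply: mulr_ge0; lra.
nra.
Qed.

End Bern.
Arguments bern {R}.

Lemma binA n j : (0 < j < n)%N -> (n <= 'C(n, j))%N.
Proof.
elim: n j => [|n IH] [|m] // hm.
have {}hm : (m < n)%N by lia.
case: m hm => [|m] hm; first by rewrite bin1.
rewrite binS.
have h1 : (n <= 'C(n, m.+1))%N by apply: IH; lia.
have h2 : (0 < 'C(n, m.+2))%N by rewrite bin_gt0.
lia.
Qed.

Lemma binB n j : (1 < j)%N -> (j + 2 <= n)%N -> (n * (n - 1) <= 2 * 'C(n, j))%N.
Proof.
elim: n j => [|n IH] [|m] //= hj hn.
rewrite binS.
have hA : (n <= 'C(n, m.+1))%N by apply: binA; lia.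
case: m hj hn hA => [|m] // hj hn hA.
case: m hj hn hA => [|m] hj hn hA.
  have := mul_bin_diag n 1; rewrite bin1 /= => h.
  have h' : (2 * 'C(n, 2) = n * n.-1)%N by rewrite h.
  have -> : (n.+1 - 1 = n)%N by lia.
  have e1 : (n.-1 = n - 1)%N by lia.
  rewrite e1 in h'.
  rewrite bin1; nia.
have := IH m.+2 isT ltac:(lia).
have := @binA n m.+3 ltac:(lia).
nia.
Qed.

Section Err.
Variable R : realType.

Definition dd (n k : nat) : R := if (0 < k < n)%N then ('C(n, k)%:R)^-1 else 0.
Definition ee (n k : nat) : R := \sum_(j < k) (dd n j + dd n j.+1).

Lemma dd_ge0 n k : 0 <= dd n k.
Proof. rewrite /dd; case: ifP => // _; by rewrite invr_ge0 ler0n. Qed.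

Lemma dd_le1 n k : (0 < n)%N -> dd n k <= (n%:R)^-1.
Proof.
move=> n0; rewrite /dd; case: ifP => [hk|_]; last by rewrite invr_ge0 ler0n.
rewrite lef_pV2 ?posrE ?ltr0n //; last by rewrite bin_gt0; lia.
by rewrite ler_nat binA.
Qed.

Lemma dd_le2 n k : (1 < k)%N -> (k + 2 <= n)%N -> dd n k <= 2 / (n%:R * (n - 1)%:R).
Proof.
move=> h1 h2; rewrite /dd ifT; last by lia.
have hC : (0 < 'C(n, k))%N by rewrite bin_gt0; lia.
have hn : (0 < n * (n - 1))%N by nia.
have ha : (0:R) < n%:R * (n - 1)%:R by rewrite -natrM ltr0n.
rewrite ler_pdivlMr // mulrC ler_pdivrMr ?ltr0n //.
rewrite -!natrM ler_nat; exact: binB.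
Qed.

Lemma ee_step n k : ee n k.+1 = ee n k + (dd n k + dd n k.+1).
Proof. by rewrite /ee big_ord_recr. Qed.

Lemma ee_ge0 n k : 0 <= ee n k.
Proof. by apply: sumr_ge0 => j _; apply: addr_ge0; apply: dd_ge0. Qed.

Lemma ee_mono n k m : ee n k <= ee n (k + m).
Proof.
elim: m => [|m IH]; first by rewrite addn0.
rewrite addnS ee_step; apply: (le_trans IH); rewrite lerDl.
by apply: addr_ge0; apply: dd_ge0.
Qed.

Lemma ddsum n : (3 <= n)%N -> \sum_(j < n.+1) dd n j <= 6 / n%:R.
Proof.
move=> n3.
have n0 : (0 < n)%N by lia.
rewrite -(big_mkord xpredT (fun j => dd n j)).
rewrite (@big_cat_nat _ _ _ 2) //=; try lia.
rewrite (@big_cat_nat _ _ _ (n - 1) 2) //=; try lia.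
have hA : \sum_(0 <= i < 2) dd n i <= 2 / n%:R.
  rewrite big_nat_recr //= big_nat1.
  by have := @dd_le1 n 0%N n0; have := @dd_le1 n 1%N n0; lra.
have hB : \sum_(n - 1 <= i < n.+1) dd n i <= 2 / n%:R.
  have -> : n.+1 = (n - 1).+2 by lia.
  rewrite big_nat_recr //= big_nat1.
  by have := @dd_le1 n (n - 1)%N n0; have := @dd_le1 n (n - 1)%N.+1 n0; lra.
have hM : \sum_(2 <= i < n - 1) dd n i <= 2 / n%:R.
  apply: (le_trans (y := \sum_(2 <= i < n - 1) (2 / (n%:R * (n - 1)%:R) : R))).
    rewrite big_nat_cond [X in _ <= X]big_nat_cond.
    apply: ler_sum => i /andP[/andP[hi1 hi2] _]; apply: dd_le2; lia.
  rewrite sumr_const_nat.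
  have hn1 : (n - 1)%:R != 0 :> R by rewrite pnatr_eq0; lia.
  have hn2 : n%:R != 0 :> R by rewrite pnatr_eq0; lia.
  apply: (le_trans (y := 2 / (n%:R * (n - 1)%:R) *+ (n - 1))).
    apply: ler_wpMn2l; last by lia.
    by rewrite divr_ge0 // -natrM ler0n.
  rewrite -mulr_natr.
  have -> : 2 / (n%:R * (n - 1)%:R) * (n - 1)%:R = 2 / n%:R :> R.
    by field; rewrite hn1 hn2.
  by [].
lra.
Qed.

Lemma ee_bound n k : (3 <= n)%N -> (k <= n)%N -> ee n k <= 12 / n%:R.
Proof.
move=> n3 kn.
have := ee_mono n k (n - k); rewrite subnKC // => hm.
apply: (le_trans hm).
rewrite /ee big_split /=.
have hs := @ddsum n n3.
have h1 : \sum_(i < n) dd n i <= \sum_(j < n.+1) dd n j.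
  by rewrite big_ord_recr /= lerDl dd_ge0.
have h2 : \sum_(i < n) dd n i.+1 <= \sum_(j < n.+1) dd n j.
  by rewrite big_ord_recl /= lerDr dd_ge0.
lra.
Qed.

End Err.

Section Main.
Variable R : realType.
Variable r : R -> int.
Hypothesis hr1 : forall a : R, `|a - (r a)%:~R| <= 1.
Hypothesis hr2 : forall z : int, r z%:~R = z.

Definition LL (n : nat) (f : R -> R) (x : R) : R :=
  \sum_(k < n.+1)
    ((r (f (k%:R / n%:R) * ('C(n, k))%:R))%:~R * x ^+ k * (1 - x) ^+ (n - k)).

Definition cf (n : nat) (f : R -> R) (k : nat) : R := (r (f (k%:R / n%:R) * ('C(n, k))%:R))%:~R / ('C(n, k))%:R.

Lemma LL_bern n f x : LL n f x = bern (cf n f) n x.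
Proof.
rewrite /LL /bern; apply: eq_bigr => k _; rewrite /cf.
have hC : ('C(n, k))%:R != 0 :> R by rewrite pnatr_eq0 -lt0n bin_gt0 -ltnS.
by rewrite divfK.
Qed.

Lemma cf_bound n f k : in_X f -> (0 < n)%N -> (k <= n)%N ->
  `|cf n f k - f (k%:R / n%:R)| <= dd R n k.
Proof.
move=> [_ [[z0 hz0] [z1 hz1]]] n0 kn.
have hn : n%:R != 0 :> R by rewrite pnatr_eq0 -lt0n.
rewrite /dd /cf; case: ifP => hk.
  have hCp : (0:R) < ('C(n, k))%:R by rewrite ltr0n bin_gt0.
  have -> : (r (f (k%:R / n%:R) * ('C(n, k))%:R))%:~R / ('C(n, k))%:R - f (k%:R / n%:R)
     = - (f (k%:R / n%:R) * ('C(n, k))%:R - (r (f (k%:R / n%:R) * ('C(n, k))%:R))%:~R)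
       / ('C(n, k))%:R.
    by field; rewrite lt0r_neq0.
  rewrite normrM normrN normfV (gtr0_norm hCp) -[X in _ <= X]mul1r.
  by rewrite ler_wpM2r // invr_ge0 ltW.
have : k = 0%N \/ k = n by lia.
case=> ->.
  by rewrite mul0r hz0 bin0 mulr1 hr2 divr1 subrr normr0.
by rewrite divff // hz1 binn mulr1 hr2 divr1 subrr normr0.
Qed.

Lemma key n b (g : R -> R) : (0 < n)%N -> incr_on01 g ->
  (forall k, (k <= n)%N -> `|b k - g (k%:R / n%:R)| <= dd R n k) ->
  incr_on01 (bern (fun k => b k + ee R n k) n).
Proof.
move=> n0 hg hb; apply: bern_mono => k kn.
rewrite ee_step.
have h1 := hb k (ltnW kn); have h2 := hb k.+1 kn.
move: h1 h2; rewrite !ler_norml => /andP[h1 h1'] /andP[h2 h2'].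
have hn : (0:R) < n%:R by rewrite ltr0n.
have hgk : g (k%:R / n%:R) <= g (k.+1%:R / n%:R).
  apply: hg.
  - by rewrite divr_ge0 // ler0n.
  - by rewrite ler_pM2r ?invr_gt0 // ler_nat.
  - by rewrite ler_pdivrMr // mul1r ler_nat.
lra.
Qed.

Lemma gen : unif_asymp_pres_mono LL.
Proof.
exists 3%N; split => //.
exists (fun n x => bern (ee R n) n x), (fun n x => - bern (ee R n) n x).
have hu : unif_to0_on01 (fun n x => bern (ee R n) n x).
  move=> eps he.
  exists (maxn 3 (Num.truncn (12 / eps)).+1) => n hn x x0 x1.
  have n3 : (3 <= n)%N by move: hn; rewrite geq_max => /andP[].
  have hn' : ((Num.truncn (12 / eps)).+1 <= n)%N by move: hn; rewrite geq_max => /andP[].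
  have hnp : (0:R) < n%:R by rewrite ltr0n; lia.
  have hb0 : 0 <= bern (ee R n) n x by apply: bern_ge0 => // k _; apply: ee_ge0.
  have hb1 : bern (ee R n) n x <= 12 / n%:R by apply: bern_le => // k kn; apply: ee_bound.
  rewrite ger0_norm //; apply: (le_lt_trans hb1).
  rewrite ltr_pdivrMr // mulrC -ltr_pdivrMr //.
  apply: (lt_le_trans (truncnS_gt _)); by rewrite ler_nat.
split => //; split.
  by move=> eps he; have [N hN] := hu eps he; exists N => n hn x x0 x1; rewrite normrN; apply: hN.
split.
  move=> f hf hinc n hn x y x0 xy y1.
  rewrite !LL_bern -!bernD.
  apply: (@key n _ f) => //; first by lia.
  by move=> k kn; apply: cf_bound => //; lia.
move=> f hf hdec n hn x y x0 xy y1.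
have hinc : incr_on01 (fun x => - f x).
  by move=> u v u0 uv v1; rewrite lerN2; apply: hdec.
have := @key n (fun k => - cf n f k) (fun x => - f x) ltac:(lia) hinc.
move=> /(_ _)/(_ x y x0 xy y1).
rewrite !bernD !bernN !LL_bern.
have H : forall k, (k <= n)%N -> `|- cf n f k - - f (k%:R / n%:R)| <= dd R n k.
  by move=> k kn; rewrite -opprD normrN; apply: cf_bound => //; lia.
move=> /(_ H); lra.
Qed.

End Main.

Lemma floor_ok (R : realType) (a : R) : `|a - (Num.floor a)%:~R| <= 1.
Proof.
have /andP[h1 h2] := floor_itv a.
rewrite intrD in h2.
rewrite ger0_norm; lra.
Qed.

Lemma rnd_ok (R : realType) (rnd : R -> int) : nearest_int rnd ->
  forall z : int, rnd z%:~R = z.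
Proof.
move=> h z; have := h z%:~R.
rewrite -intrB -intr_norm.
have -> : (2^-1 : R) = 1 / 2 by rewrite mul1r.
move=> H.
have : `|z - rnd z%:~R| < 1 :> int.
  rewrite -(ltr_int R); apply: (le_lt_trans H); lra.
move=> H'; apply/eqP; rewrite eq_sym -subr_eq0; apply/eqP.
move: H'; case: (z - rnd z%:~R) => [[|m]|m] //.
Qed.

Theorem theorem1p3 (R : realType) (rnd : R -> int) :
  nearest_int rnd ->
  unif_asymp_pres_mono (@Btilde R) /\ unif_asymp_pres_mono (Bhat rnd).
Proof.
move=> hn; split.
  exact: (@gen R (@Num.floor R) (@floor_ok R) (intrKfloor (R := R))).
apply: (@gen R rnd); last exact: rnd_ok.
move=> a; apply: (le_trans (hn a)); lra.
Qed.
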